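(* Suppose Assumptions (C1), (C2), (C3) and (CV) hold. If $x\in\mathcal{X}$ is such that $y^*(x)$ is a single point, then $\lim_{t\to0^+}\widetilde\phi_t(x)=\phi(x)$.
   Context: Let $f,g,h_1,\dots,h_k:\mathbb{R}^n\times\mathbb{R}^m\to\mathbb{R}$ and $\mathcal{X}\subseteq\mathbb{R}^n$. For $x\in\mathcal{X}$ let $\mathcal{Y}(x)=\{y: h_i(x,y)\le 0,\ i=1,\dots,k\}$, $y^*(x)=\arg\min_{y\in\mathcal{Y}(x)} g(x,y)$, and $\phi(x)=\min_{y\in y^*(x)} f(x,y)$. For $t>0$ let $\widetilde g_t(x,y)=g(x,y)-t\sum_{i=1}^k\log(-h_i(x,y))$ (defined when all $h_i(x,y)<0$), $y_t^*(x)=\arg\min_y\widetilde g_t(x,y)$ and $\widetilde\phi_t(x)=f(x,y_t^*(x))$. Assumptions: (C1) $f$ is once and $g,h_i$ twice continuously differentiable on the relevant domain; (C2) $\mathcal{X}$ is convex and compact and for every $x\in\mathcal{X}$ there exists $y\in\mathcal{Y}(x)$ with $h_i(x,y)<0$ for all $i\in\{1,\dots,k\}$; (C3) for every $x\in\mathcal{X}$, $\mathcal{Y}(x)$ is compact and $\|y\|\le R$ for all $y\in\mathcal{Y}(x)$; (CV) for every $x$, $g(x,\cdot)$ is convex and each $h_i(x,\cdot)$ is convex, and at least one $h_i(x,\cdot)$ is strongly convex in $y$. *)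

(* Defs.v *)
From mathcomp Require Import all_boot all_order all_algebra.
From mathcomp Require Import all_classical all_reals all_analysis.
Import numFieldNormedType.Exports.
Import Order.TTheory GRing.Theory Num.Theory.
Set Implicit Arguments. Unset Strict Implicit. Unset Printing Implicit Defensive.
Local Open Scope ring_scope.
Local Open Scope classical_set_scope.

Section Defs.
Variable R : realType.

Definition C1fun (V : normedModType R) (F : V -> R) : Prop :=
  (forall z, differentiable F z) /\ (forall v : V, continuous (fun z => 'D_v F z)).

Definition C2fun (V : normedModType R) (F : V -> R) : Prop :=
  C1fun F /\ (forall v : V, C1fun (fun z => 'D_v F z)).

Definition enorm (p : nat) (y : 'rV[R]_p) : R := Num.sqrt (\sum_(j < p) y ord0 j ^+ 2).

Definition convex_rVset (p : nat) (A : set 'rV[R]_p) : Prop :=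
  forall a b (l : R), 0 <= l <= 1 -> A a -> A b -> A (l *: a + (1 - l) *: b).

Definition convex_fn (p : nat) (F : 'rV[R]_p -> R) : Prop :=
  forall a b (l : R), 0 <= l <= 1 ->
    F (l *: a + (1 - l) *: b) <= l * F a + (1 - l) * F b.

Definition strongly_convex_fn (p : nat) (F : 'rV[R]_p -> R) : Prop :=
  exists mu : R, 0 < mu /\
  forall a b (l : R), 0 <= l <= 1 ->
    F (l *: a + (1 - l) *: b)
      <= l * F a + (1 - l) * F b - mu / 2 * l * (1 - l) * enorm (a - b) ^+ 2.

Variables (n m k : nat).
Implicit Types (f g : 'rV[R]_n * 'rV[R]_m -> R) (h : 'I_k -> 'rV[R]_n * 'rV[R]_m -> R).

Definition Yset h (x : 'rV[R]_n) : set 'rV[R]_m :=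
  [set y | forall i, h i (x, y) <= 0].

Definition Yint h (x : 'rV[R]_n) : set 'rV[R]_m :=
  [set y | forall i, h i (x, y) < 0].

Definition ystar g h (x : 'rV[R]_n) : set 'rV[R]_m :=
  [set y | Yset h x y /\ forall y', Yset h x y' -> g (x, y) <= g (x, y')].

Definition phi f g h (x : 'rV[R]_n) : R :=
  inf [set f (x, y) | y in ystar g h x].

Definition gtilde g h (t : R) (x : 'rV[R]_n) (y : 'rV[R]_m) : R :=
  g (x, y) - t * \sum_(i < k) ln (- h i (x, y)).

Definition ytstar_set g h (t : R) (x : 'rV[R]_n) : set 'rV[R]_m :=
  [set y | Yint h x y /\ forall y', Yint h x y' -> gtilde g h t x y <= gtilde g h t x y'].

(* the (unique, for t > 0) minimizer, selected by choice *)
Definition ytstar g h (t : R) (x : 'rV[R]_n) : 'rV[R]_m :=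
  xget 0 (ytstar_set g h t x).

Definition phitilde f g h (t : R) (x : 'rV[R]_n) : R := f (x, ytstar g h t x).

End Defs.

(* Main.v *)
Require Import Defs.
From mathcomp Require Import all_boot all_order all_algebra.
From mathcomp Require Import all_classical all_reals all_analysis.
From mathcomp Require Import ring lra.
Import numFieldNormedType.Exports.
Import Order.TTheory GRing.Theory Num.Theory.
Local Open Scope ring_scope.
Local Open Scope classical_set_scope.

Lemma cont_sum (R : realType) (T : topologicalType) (k : nat) (F : 'I_k -> T -> R) :
  (forall i, continuous (F i)) -> continuous (fun z => \sum_(i < k) F i z).
Proof.
elim: k F => [|k IH] F cF.
  under eq_fun do rewrite big_ord0; exact: cst_continuous.
under eq_fun do rewrite big_ord_recr /=.
move=> z; apply: cvgD; last exact: cF.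
exact: (IH (fun i => F (widen_ord (leqnSn k) i))).
Qed.

Lemma sec_cont (R : realType) (n m : nat) (F : 'rV[R]_n * 'rV[R]_m -> R) x :
  C1fun F -> continuous (fun y => F (x, y)).
Proof.
move=> [dF _] y.
have dp : differentiable (fun z : 'rV[R]_m => (x, z)) y.
  by apply: differentiable_pair; [exact: differentiable_cst|by []].
apply: differentiable_continuous.
exact: (differentiable_comp dp (dF (x, y))).
Qed.
Section Barrier.
Variables (R : realType) (n m k : nat).
Variables (g : 'rV[R]_n * 'rV[R]_m -> R) (h : 'I_k -> 'rV[R]_n * 'rV[R]_m -> R).
Variable (x : 'rV[R]_n).
Hypothesis cg : continuous (fun y => g (x, y)).
Hypothesis ch : forall i, continuous (fun y => h i (x, y)).
Hypothesis cY : compact (Yset h x).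
Variable y0 : 'rV[R]_m.
Hypothesis Hy0 : forall i, h i (x, y0) < 0.

Lemma Yne : Yset h x !=set0.
Proof. by exists y0 => i; apply: ltW. Qed.

Lemma YintY y : Yint h x y -> Yset h x y.
Proof. by move=> H i; apply: ltW. Qed.

Lemma Mbound : exists M, 1 <= M /\ forall y i, Yset h x y -> - h i (x, y) <= M.
Proof.
pose P (y : 'rV[R]_m) : R := \sum_(i < k) `|h i (x, y)|.
have cP : continuous P.
  apply: cont_sum => i z.
  exact: (continuous_comp (ch i z) (@norm_continuous _ R^o _)).
have [c _ Hc] := compact_EVT_max Yne cY (@continuous_subspaceT _ _ _ P cP).
exists (Num.max 1 (P c)); split; first by rewrite le_max lexx.
move=> y i Yy; rewrite le_max; apply/orP; right.
apply: (le_trans _ (Hc y (mem_set Yy))).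
rewrite /P (bigD1 i) //= -normrN.
apply: ler_wpDr; first by apply: sumr_ge0 => j _.
exact: ler_norm.
Qed.

Lemma gbound : exists gm, forall y, Yset h x y -> gm <= g (x, y).
Proof.
have [c _ Hc] := compact_EVT_min Yne cY (@continuous_subspaceT _ _ _ _ cg).
by exists (g (x, c)) => y Yy; apply: Hc; apply: mem_set.
Qed.


Variables (M gm : R).
Hypothesis HM1 : 1 <= M.
Hypothesis HM : forall y i, Yset h x y -> - h i (x, y) <= M.
Hypothesis Hgm : forall y, Yset h x y -> gm <= g (x, y).

Let L := ln M.

Lemma L0 : 0 <= L.
Proof. exact: ln_ge0. Qed.

Lemma lnh_le y i : Yint h x y -> ln (- h i (x, y)) <= L.
Proof.
move=> Hy; rewrite /L ler_ln ?posrE ?oppr_gt0 //.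
  by apply: HM; apply: YintY.
exact: lt_le_trans ltr01 HM1.
Qed.

Lemma sum_le y : Yint h x y -> \sum_(i < k) ln (- h i (x, y)) <= k%:R * L.
Proof.
move=> Hy; apply: (le_trans (y := \sum_(i < k) L)).
  by apply: ler_sum => i _; apply: lnh_le.
by rewrite sumr_const card_ord mulr_natl.
Qed.

Lemma sum_le_j y j : Yint h x y ->
  \sum_(i < k) ln (- h i (x, y)) <= ln (- h j (x, y)) + k%:R * L.
Proof.
move=> Hy; rewrite (bigD1 j) //= lerD2l.
apply: (le_trans (y := \sum_(i < k | i != j) L)).
  by apply: ler_sum => i _; apply: lnh_le.
have -> : k%:R * L = \sum_(i < k) L by rewrite sumr_const card_ord mulr_natl.
by rewrite [X in _ <= X](bigD1 j) //= lerDr L0.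
Qed.

Lemma ytstar_ex t : 0 < t -> exists y, ytstar_set g h t x y.
Proof.
move=> t0.
pose c := gtilde g h t x y0.
pose A := c - gm + t * (k%:R * L) + 1.
pose d := expR (- (A / t)).
have d0 : 0 < d by apply: expR_gt0.
have key : forall y, Yint h x y -> gtilde g h t x y <= c -> forall j, d <= - h j (x, y).
  move=> y Hy Hc j; rewrite leNgt; apply/negP => hlt.
  have hpos : 0 < - h j (x, y) by rewrite oppr_gt0.
  have e1 : ln (- h j (x, y)) < - (A / t).
    by rewrite -[X in _ < X]expRK ltr_ln ?posrE.
  have e2 : t * ln (- h j (x, y)) < - A.
    have -> : - A = t * (- (A / t)) by field; rewrite gt_eqF.
    by rewrite ltr_pM2l.
  have e3 := @sum_le_j y j Hy.
  have e4 : t * \sum_(i < k) ln (- h i (x, y)) <= t * ln (- h j (x, y)) + t * (k%:R * L).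
    by rewrite -mulrDr ler_wpM2l // ltW.
  have e5 := @Hgm y (@YintY y Hy).
  move: Hc; rewrite /gtilde /c /A in e2 *.
  rewrite /c /A in e2.
  move: e2 e4 e5; rewrite /gtilde.
  set S1 := t * \sum_(i < k) _.
  set S2 := t * ln _.
  set T1 := t * (k%:R * L).
  set G0 := g (x, y0) - _.
  lra.
pose S := [set y | forall i, h i (x, y) <= - d].
have cS : closed S.
  have -> : S = \bigcap_(i in [set: 'I_k]) ((fun y => h i (x, y)) @^-1` [set r | r <= - d]).
    by apply/seteqP; split => y /= Hy i; [move=> _; apply: Hy|apply: Hy].
  apply: closed_bigI => i _.
  apply: (proj1 (continuous_closedP _) (ch i)). exact: closed_le.
have SY : S `<=` Yset h x.
  move=> y Sy i; apply: (le_trans (Sy i)); by rewrite oppr_le0 ltW.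
have cpS : compact S := subclosed_compact cS cY SY.
have Sy0 : S y0.
  move=> i; rewrite lerNr; apply: (key y0 Hy0 (lexx _)).
pose Gb (y : 'rV[R]_m) : R := g (x, y) - t * \sum_(i < k) ln (Num.max (- h i (x, y)) d).
have cS1 : continuous (fun y : 'rV[R]_m => \sum_(i < k) ln (Num.max (- h i (x, y)) d)).
  apply: (@cont_sum R _ k (fun i y => ln (Num.max (- h i (x, y)) d))) => i w.
  have H1 : {for w, continuous (fun y : 'rV[R]_m => Num.max (- h i (x, y)) d)}.
    by apply: continuous_max; [exact: (cvgN (ch i w)) | exact: cst_continuous].
  have H2 : {for (Num.max (- h i (x, w)) d), continuous (@ln R)}.
    by apply: continuous_ln; rewrite lt_max d0 orbT.
  exact: (continuous_comp H1 H2).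
have cS2 : continuous (fun y : 'rV[R]_m => - (t * \sum_(i < k) ln (Num.max (- h i (x, y)) d))).
  move=> z; exact: (cvgN (cvgM (cvg_cst t) (cS1 z))).
have cGb : continuous Gb.
  move=> z; exact: (cvgD (cg z) (cS2 z)).
have eqG : forall y, (forall i, d <= - h i (x, y)) -> Gb y = gtilde g h t x y.
  move=> y Hy; rewrite /Gb /gtilde; congr (_ - t * _).
  by apply: eq_bigr => i _; rewrite max_l.
have [y1 Sy1 Hy1] := compact_EVT_min (ex_intro _ y0 Sy0) cpS (@continuous_subspaceT _ _ _ Gb cGb).
move: Sy1; rewrite inE => Sy1.
have dS : forall y, S y -> forall i, d <= - h i (x, y).
  by move=> y Sy i; rewrite lerNr; apply: Sy.
exists y1; split.
  by move=> i; apply: (le_lt_trans (Sy1 i)); rewrite oppr_lt0.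
move=> y' Hy'.
rewrite -eqG; last exact: dS.
have [le|gt] := lerP (gtilde g h t x y') c.
  have Sy' : S y' by move=> i; rewrite lerNr; apply: key.
  by rewrite -eqG ?Hy1 ?inE //; apply: dS.
apply: le_trans (Hy1 y0 _) _; first by rewrite inE.
by rewrite eqG; [apply: ltW | apply: dS].
Qed.

End Barrier.

Section Main.
Variables (R : realType) (n m k : nat).
Variables (f g : 'rV[R]_n * 'rV[R]_m -> R) (h : 'I_k -> 'rV[R]_n * 'rV[R]_m -> R).
Variable (x : 'rV[R]_n).
Hypothesis cf : continuous (fun y => f (x, y)).
Hypothesis cg : continuous (fun y => g (x, y)).
Hypothesis ch : forall i, continuous (fun y => h i (x, y)).
Hypothesis cY : compact (Yset h x).
Variable y0 : 'rV[R]_m.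
Hypothesis Hy0 : forall i, h i (x, y0) < 0.
Hypothesis cvxg : convex_fn (fun y => g (x, y)).
Hypothesis cvxh : forall i, convex_fn (fun y => h i (x, y)).
Variable ys : 'rV[R]_m.
Hypothesis HY : ystar g h x = [set ys].

Lemma main_cvg : phitilde f g h t x @[t --> 0^'+] --> phi f g h x.
Proof.
have [Yys ysmin] : ystar g h x ys by rewrite HY.
have -> : phi f g h x = f (x, ys) by rewrite /phi HY image_set1 inf1.
have [M [HM1 HM]] := @Mbound _ _ _ _ h x ch cY y0 Hy0.
have [gm Hgm] := @gbound _ _ _ _ g h x cg cY y0 Hy0.
apply/cvgrPdist_lt => e e0.
have := cf ys; move=> /cvgrPdist_lt /(_ e e0).
case/nbhs_ballP => r /= r0 Hr.
have [eta eta0 Heta] : exists2 eta : R, 0 < eta &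
    forall y, Yset h x y -> g (x, y) < g (x, ys) + eta -> ball ys r y.
  case: (pselect ((Yset h x `&` ~` ball ys r) !=set0)) => [K0|K0].
    have cK : compact (Yset h x `&` ~` ball ys r).
      by apply: compact_closedI cY _; rewrite closedC; apply: ball_open.
    have [z Kz Hz] := compact_EVT_min K0 cK (@continuous_subspaceT _ _ _ _ cg).
    move: Kz; rewrite inE => -[Yz nbz].
    have gz : g (x, ys) < g (x, z).
      rewrite ltNge; apply/negP => le.
      have : ystar g h x z.
        split => // y' Yy'; apply: le_trans le _; exact: ysmin.
      rewrite HY => /= zys; apply: nbz; rewrite zys; exact: ballxx.
    exists (g (x, z) - g (x, ys)); first by rewrite subr_gt0.
    move=> y Yy gy; apply: contrapT => nb.
    have := Hz y; rewrite inE => /(_ (conj Yy nb)); lra.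
  exists 1 => // y Yy _; apply: contrapT => nb; apply: K0; by exists y.
pose dd := g (x, y0) - g (x, ys).
pose a := `|dd| + 1.
have a0 : 0 < a by rewrite /a ltr_wpDl.
pose s := Num.min 1 (eta / (4 * a)).
have s0 : 0 < s by rewrite lt_min ltr01 /= divr_gt0 // mulr_gt0.
have s1 : s <= 1 by rewrite ge_min lexx.
have s2 : s <= eta / (4 * a) by rewrite ge_min lexx orbT.
pose w := s *: y0 + (1 - s) *: ys.
have Hw : Yint h x w.
  move=> i; have := @cvxh i y0 ys s; rewrite (ltW s0) s1 /= => /(_ isT) H.
  have := Hy0 i; have := Yys i; move: H s0 s1; rewrite /w; nra.
have gw : g (x, w) < g (x, ys) + eta / 2.
  have := @cvxg y0 ys s; rewrite (ltW s0) s1 /= => /(_ isT) H.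
  apply: (le_lt_trans H).
  have e1 : s * a <= eta / 4.
    have -> : eta / 4 = eta / (4 * a) * a by field; rewrite gt_eqF.
    by rewrite ler_wpM2r // ltW.
  have e2 : s * dd <= s * a.
    rewrite ler_wpM2l ?(ltW s0) // /a; have := ler_norm dd; lra.
  rewrite /dd in e2; lra.
pose B := \sum_(i < k) ln (- h i (x, w)).
pose C := k%:R * ln M - B.
pose tau := eta / (2 * (`|C| + 1)).
have tau0 : 0 < tau by rewrite divr_gt0 // mulr_gt0 // ltr_wpDl.
near=> t.
have t0 : 0 < t by near: t; exact: nbhs_right_gt.
have ttau : t < tau by near: t; exact: nbhs_right_lt.
have [Yt Hyt] : ytstar_set g h t x (ytstar g h t x) :=
  xgetPex 0 (@ytstar_ex _ _ _ _ g h x cg ch cY y0 Hy0 M gm HM1 HM Hgm t t0).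
rewrite /phitilde; apply: Hr; apply: Heta; first exact: (@YintY _ _ _ _ h x _ Yt).
have H1 := Hyt w Hw.
have H2 := @sum_le _ _ _ _ h x M HM1 HM _ Yt.
have H3 : t * \sum_(i < k) ln (- h i (x, ytstar g h t x)) <= t * (k%:R * ln M).
  by rewrite ler_wpM2l // ltW.
have H4 : t * (2 * (`|C| + 1)) < eta.
  by rewrite -ltr_pdivlMr // mulr_gt0 // ltr_wpDl.
have H5 : t * C <= t * `|C|.
  by rewrite ler_wpM2l ?ler_norm // ltW.
move: H1 H3 H4 H5; rewrite /gtilde /C /B.
set Sy := \sum_(i < k) _.
set Sw := \sum_(i < k) _.
move=> H1 H3 H4 H5.
have E : t * (k%:R * ln M - Sw) = t * (k%:R * ln M) - t * Sw by ring.
rewrite E in H5.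
have E2 : t * (2 * (`|C| + 1)) = 2 * (t * `|C|) + 2 * t by ring.
rewrite E2 in H4.
lra.
Unshelve. all: end_near.
Qed.

End Main.

Theorem theorem11 (R : realType) (n m k : nat)
  (f g : 'rV[R]_n * 'rV[R]_m -> R) (h : 'I_k -> 'rV[R]_n * 'rV[R]_m -> R)
  (X : set 'rV[R]_n) (Rb : R) :
  (* (C1) *)
  C1fun f -> C2fun g -> (forall i, C2fun (h i)) ->
  (* (C2) *)
  convex_rVset X -> compact X ->
  (forall x, X x -> exists y, Yset h x y /\ forall i, h i (x, y) < 0) ->
  (* (C3) *)
  (forall x, X x -> compact (Yset h x) /\ forall y, Yset h x y -> enorm y <= Rb) ->
  (* (CV) *)
  (forall x, X x ->
     convex_fn (fun y => g (x, y)) /\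
     (forall i, convex_fn (fun y => h i (x, y))) /\
     exists i, strongly_convex_fn (fun y => h i (x, y))) ->
  forall x, X x -> (exists y0, ystar g h x = [set y0]) ->
  phitilde f g h t x @[t --> 0^'+] --> phi f g h x.
Proof.
move=> cf cg ch _ _ Hsl HY3 Hcv x Xx [ys HY].
have [y0 [_ Hy0]] := Hsl x Xx.
have [cY _] := HY3 x Xx.
have [cvxg [cvxh _]] := Hcv x Xx.
apply: (@main_cvg R n m k f g h x _ _ _ cY y0 Hy0 cvxg cvxh ys HY).
- exact: sec_cont.
- exact: sec_cont (proj1 cg).
- by move=> i; exact: sec_cont (proj1 (ch i)).
Qed.
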